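(* Let $G=(\mathcal V,E)$ be a simple, connected, undirected graph with vertex set $\mathcal V=\{1,\dots,N\}$ and nonnegative edge weights $w_{ij}=w_{ji}$ ($w_{ii}=0$), degree matrix $\mathbf D=\mathrm{diag}(d_1,\dots,d_N)$ with $d_i=\sum_j w_{ij}$, adjacency matrix $\mathbf W=(w_{ij})$, and symmetric normalized Laplacian $\boldsymbol{\mathcal L}=\mathbf D^{-1/2}(\mathbf D-\mathbf W)\mathbf D^{-1/2}$. Fix an orthonormal eigenbasis $\mathbf u_1,\dots,\mathbf u_N$ of $\boldsymbol{\mathcal L}$ with eigenvalues $0=\lambda_1\le\dots\le\lambda_N$, and let $\mathbf U$ be the matrix with columns $\mathbf u_i$. For a signal $\phi\in\mathbb R^N$, $\phi\neq 0$, let its bandwidth be $\omega(\phi)=\max\{\lambda_i : \langle \phi,\mathbf u_i\rangle\neq 0\}$. For a nonempty subset $\mathcal S\subseteq\mathcal V$, define the cut-off frequency $\omega_c(\mathcal S)=\inf\{\omega(\phi): \phi\in\mathbb R^N\setminus\{0\},\ \phi(i)=0\ \forall i\in\mathcal S\}$ (with $\inf\emptyset=+\infty$), and let $\mathcal K=\{i:\lambda_i<\omega_c(\mathcal S)\}$. For $\theta\in\mathbb R$, let $\mathcal P_\theta=\sum_{i:\lambda_i<\theta}\mathbf u_i\mathbf u_i^T$ be the orthogonal projection onto the span of eigenvectors with eigenvalue less than $\theta$. Let $\mathbf f\in\mathbb R^N$ and $\delta>0$, and define the smoothness $\gamma(\mathbf f)=\min\{\theta : \|\mathbf f-\mathcal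 P_\theta\mathbf f\|\le\delta\}$. Let $p$ be the number of eigenvalues $\lambda_i$ of $\boldsymbol{\mathcal L}$ with $\lambda_i<\gamma(\mathbf f)$. For a sampling set $\mathcal S$, let $\hat{\mathbf f}=\mathbf U_{\mathcal V,\mathcal K}\boldsymbol\alpha^*$ where $\boldsymbol\alpha^*=\arg\min_{\boldsymbol\alpha}\|\mathbf U_{\mathcal S,\mathcal K}\boldsymbol\alpha-\mathbf f(\mathcal S)\|$ (here $\mathbf U_{A,B}$ is the submatrix of $\mathbf U$ with rows in $A$ and columns in $B$, and $\mathbf f(\mathcal S)$ is the restriction of $\mathbf f$ to $\mathcal S$), the least-squares problem being required to have a unique solution. Then every sampling set $\mathcal S$ whose reconstruction satisfies $\|\mathbf f-\hat{\mathbf f}\|\le\delta$ has $|\mathcal S|\ge p$; i.e., the minimum number of labels $l$ needed to achieve $\|\mathbf f-\hat{\mathbf f}\|\le\delta$ satisfies $l\ge p$.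
   Context: A graph signal is a vector $\mathbf f\in\mathbb R^N$ indexed by the vertices; its Graph Fourier Transform is $\mathbf U^T\mathbf f$, and eigenvalues of $\boldsymbol{\mathcal L}$ play the role of frequencies. Sampling $\mathbf f$ on $\mathcal S$ (labeling the nodes in $\mathcal S$) means retaining $\mathbf f(\mathcal S)$, and $\hat{\mathbf f}$ is the bandlimited reconstruction of $\mathbf f$ from these samples using the eigenvectors with eigenvalue below the cut-off frequency of $\mathcal S$. *)

(* Defs.v *)
From mathcomp Require Import all_boot all_order all_algebra.
From mathcomp Require Import boolp classical_sets reals constructive_ereal ereal.
Set Implicit Arguments. Unset Strict Implicit. Unset Printing Implicit Defensive.
Import Order.TTheory GRing.Theory Num.Theory.
Local Open Scope ring_scope.
Local Open Scope classical_set_scope.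

Section GSP.
Variables (R : realType) (N : nat).

Definition vnorm m (v : 'cV[R]_m) : R := Num.sqrt (\sum_(a < m) v a 0 ^+ 2).

Definition adj_edge (W : 'M[R]_N) : rel 'I_N := fun i j => 0 < W i j.
Definition weighted_simple_connected (W : 'M[R]_N) : Prop :=
  [/\ forall i j, 0 <= W i j, W^T = W, forall i, W i i = 0
    & forall i j, connect (adj_edge W) i j].

Definition degree (W : 'M[R]_N) (i : 'I_N) : R := \sum_(j < N) W i j.
Definition degmx (W : 'M[R]_N) : 'M[R]_N := diag_mx (\row_i degree W i).
Definition degmx_invsqrt (W : 'M[R]_N) : 'M[R]_N :=
  diag_mx (\row_i (Num.sqrt (degree W i))^-1).
Definition normLap (W : 'M[R]_N) : 'M[R]_N :=
  degmx_invsqrt W *m (degmx W - W) *m degmx_invsqrt W.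

Definition ortho_eigenbasis (L U : 'M[R]_N) (lam : 'I_N -> R) : Prop :=
  [/\ U^T *m U = 1%:M, L *m U = U *m diag_mx (\row_i lam i)
    & forall i j : 'I_N, (i <= j)%N -> lam i <= lam j].

Definition gft (U : 'M[R]_N) (phi : 'cV[R]_N) (i : 'I_N) : R := (U^T *m phi) i 0.

Definition bandwidth (U : 'M[R]_N) (lam : 'I_N -> R) (phi : 'cV[R]_N) : \bar R :=
  \big[maxe/-oo%E]_(i | gft U phi i != 0) (lam i)%:E.

(* cut-off frequency of S (inf of the empty set is +oo) *)
Definition cutoff (U : 'M[R]_N) (lam : 'I_N -> R) (S : {set 'I_N}) : \bar R :=
  ereal_inf [set bandwidth U lam phi | phi in
     [set phi : 'cV[R]_N | phi != 0 /\ forall i, i \in S -> phi i 0 = 0]].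

Definition Kset (U : 'M[R]_N) (lam : 'I_N -> R) (S : {set 'I_N}) : {set 'I_N} :=
  [set i | ((lam i)%:E < cutoff U lam S)%E].

Definition proj_below (U : 'M[R]_N) (lam : 'I_N -> R) (theta : R) : 'M[R]_N :=
  \sum_(i < N | lam i < theta) (col i U *m (col i U)^T).

Definition smoothness (U : 'M[R]_N) (lam : 'I_N -> R) (delta : R) (f : 'cV[R]_N)
  : \bar R :=
  ereal_inf [set theta%:E | theta in
     [set theta : R | vnorm (f - proj_below U lam theta *m f) <= delta]].

Definition num_below (lam : 'I_N -> R) (g : \bar R) : nat :=
  #|[set i : 'I_N | ((lam i)%:E < g)%E]|.

(* submatrix U_{A,B}, rows/columns enumerated increasingly *)
Definition subU (U : 'M[R]_N) (A B : {set 'I_N}) : 'M[R]_(#|A|, #|B|) :=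
  \matrix_(a, b) U (enum_val a) (enum_val b).
Definition restr (f : 'cV[R]_N) (S : {set 'I_N}) : 'cV[R]_#|S| :=
  \col_a f (enum_val a) 0.

Definition unique_lsq m n (A : 'M[R]_(m, n)) (b : 'cV[R]_m) (alpha : 'cV[R]_n)
  : Prop :=
  (forall beta, vnorm (A *m alpha - b) <= vnorm (A *m beta - b)) /\
  (forall beta, (forall g, vnorm (A *m beta - b) <= vnorm (A *m g - b)) ->
     beta = alpha).

Definition colsubmx (U : 'M[R]_N) (B : {set 'I_N}) : 'M[R]_(N, #|B|) :=
  \matrix_(i, b) U i (enum_val b).

Definition reconstr (U : 'M[R]_N) (lam : 'I_N -> R) (S : {set 'I_N})
  (alpha : 'cV[R]_#|Kset U lam S|) : 'cV[R]_N :=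
  colsubmx U (Kset U lam S) *m alpha.

End GSP.
Arguments reconstr {R N} U lam S alpha.

(* Main.v *)
Require Import Defs.
From mathcomp Require Import all_boot all_order all_algebra.
From mathcomp Require Import reals.
From mathcomp Require boolp classical_sets constructive_ereal ereal.
Import Order.TTheory GRing.Theory Num.Theory.
Local Open Scope ring_scope.

Section Aux.
Variable R : realType.

Lemma vnormE m (v : 'cV[R]_m) : vnorm v = Num.sqrt ((v^T *m v) 0 0).
Proof. by rewrite /vnorm mxE; congr Num.sqrt; apply eq_bigr => a _; rewrite !mxE expr2. Qed.

Lemma sq_ge0 m (v : 'cV[R]_m) : 0 <= (v^T *m v) 0 0.
Proof. rewrite mxE; apply: sumr_ge0 => a _; rewrite !mxE; rewrite -expr2; exact: sqr_ge0. Qed.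

Lemma orth_le N k (B : 'M[R]_(N, k)) (x : 'cV[R]_N) (z : 'cV[R]_k) :
  B^T *m x = 0 -> vnorm x <= vnorm (x + B *m z).
Proof.
move=> Hx; rewrite !vnormE ler_sqrt; last by apply: sq_ge0.
have HxB : x^T *m B = 0 by rewrite -[B]trmxK -trmx_mul Hx trmx0.
rewrite (linearD (@trmx R _ _)) /= mulmxDl !mulmxDr.
rewrite mulmxA HxB mul0mx trmx_mul -mulmxA Hx mulmx0 addr0 add0r.
rewrite [X in _ <= X]mxE -[X in X <= _]addr0 lerD2l.
by rewrite -trmx_mul; apply: sq_ge0.
Qed.

Lemma proj_best N k (B : 'M[R]_(N, k)) (f : 'cV[R]_N) (a : 'cV[R]_k) :
  B^T *m B = 1%:M -> vnorm (f - B *m B^T *m f) <= vnorm (f - B *m a).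
Proof.
move=> HB.
have -> : f - B *m a = (f - B *m B^T *m f) + B *m (B^T *m f - a).
  by rewrite mulmxBr mulmxA addrA subrK.
apply: orth_le.
by rewrite mulmxBr !mulmxA HB mul1mx subrr.
Qed.

End Aux.

Lemma colsub_ortho (R : realType) N (U : 'M[R]_N) (K : {set 'I_N}) :
  U^T *m U = 1%:M -> (colsubmx U K)^T *m colsubmx U K = 1%:M.
Proof.
move=> HU; apply/matrixP => k l; rewrite !mxE.
have := congr1 (fun M : 'M[R]_N => M (enum_val k) (enum_val l)) HU; rewrite /= !mxE.
by rewrite (inj_eq enum_val_inj) => <-; apply: eq_bigr => a _; rewrite !mxE.
Qed.

Module KeyM.
Import classical_sets constructive_ereal ereal.
Local Open Scope ring_scope.
Lemma key (R : realType) N (U : 'M[R]_N) lam (f : 'cV[R]_N) delta S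
  (alpha : 'cV[R]_#|Kset U lam S|) (j0 : 'I_N) :
  U^T *m U = 1%:M -> j0 \notin Kset U lam S ->
  vnorm (f - reconstr U lam S alpha) <= delta ->
  (num_below lam (smoothness U lam delta f) <= #|Kset U lam S|)%N.
Proof.
move=> HU Hj0 Hf.
set K := Kset U lam S.
set B := colsubmx U K.
have HB : B^T *m B = 1%:M by apply: colsub_ortho.
case: (@arg_minP _ _ _ j0 (fun j => j \notin K) lam Hj0) => j Hj Hjm.
have HKe : forall i, (lam i < lam j) = (i \in K).
  move=> i; apply/idP/idP.
    move=> Hl; apply/negPn/negP => Hi; have := Hjm _ Hi; by rewrite leNgt Hl.
  rewrite inE => Hi; move: Hj; rewrite inE -leNgt => Hj.
  by have := lt_le_trans Hi Hj; rewrite lte_fin.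
have Hproj : proj_below U lam (lam j) = B *m B^T.
  apply/matrixP => a b; rewrite /proj_below summxE mxE.
  rewrite (eq_bigl (fun i => i \in K)); last by move=> i; rewrite HKe.
  rewrite big_enum_val; apply: eq_bigr => k _.
  by rewrite mxE big_ord1 !mxE.
have Hs : (smoothness U lam delta f <= (lam j)%:E)%E.
  apply: ereal_inf_lbound; exists (lam j) => //.
  rewrite /= Hproj; exact: (le_trans (@proj_best R _ _ B f alpha HB) Hf).
rewrite /num_below; apply: subset_leq_card; apply/fintype.subsetP => i Hi.
rewrite -HKe -lte_fin; apply: lt_le_trans _ Hs; move: Hi; by rewrite inE.
Qed.
End KeyM.

Theorem theorem2 (R : realType) (N : nat) (W : 'M[R]_N) (U : 'M[R]_N)
  (lam : 'I_N -> R) (f : 'cV[R]_N) (delta : R) :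
  weighted_simple_connected W ->
  ortho_eigenbasis (normLap W) U lam ->
  0 < delta ->
  forall (S : {set 'I_N}) (alpha : 'cV[R]_#|Kset U lam S|),
    S != set0 ->
    unique_lsq (subU U S (Kset U lam S)) (restr f S) alpha ->
    vnorm (f - reconstr U lam S alpha) <= delta ->
    (num_below lam (smoothness U lam delta f) <= #|S|)%N.
Proof.
move=> _ [HU _ _] _ S alpha _ [Hmin Huniq] Hf.
set K := Kset U lam S.
set B := colsubmx U K.
have HB : B^T *m B = 1%:M.
  apply/matrixP => k l; rewrite !mxE.
  have := congr1 (fun M : 'M[R]_N => M (enum_val k) (enum_val l)) HU; rewrite /= !mxE.
  rewrite (inj_eq enum_val_inj) => <-; apply: eq_bigr => a _; rewrite !mxE //.
have HKS : (#|K| <= #|S|)%N.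
  rewrite leqNgt; apply/negP => Hlt.
  set A := subU U S K.
  have Hnf : ~~ row_free A^T.
    rewrite /row_free; apply/negP => /eqP Hr.
    have := rank_leq_col A^T; rewrite Hr => Hle.
    by move: (leq_ltn_trans Hle Hlt); rewrite ltnn.
  have : kermx A^T != 0 by rewrite kermx_eq0.
  have [i Hi | Hall] := pickP (fun i => row i (kermx A^T) != 0).
    move=> _.
    set v := row i (kermx A^T).
    have Hv : A *m v^T = 0.
      by rewrite -(trmxK A) -trmx_mul /v -row_mul mulmx_ker row0 trmx0.
    have Hmin' : forall g, vnorm (A *m (alpha + v^T) - restr f S) <=
                        vnorm (A *m g - restr f S).
      by move=> g; rewrite mulmxDr Hv addr0; apply: Hmin.
    have := Huniq _ Hmin' => /eqP; rewrite -subr_eq0 addrC addKr trmx_eq0.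
    by move/eqP=> Hv0; move: Hi; rewrite -/v Hv0 eqxx.
  move/negP; apply; apply/eqP/row_matrixP => i; rewrite row0.
  by move: (Hall i) => /= /negbFE/eqP.
apply: leq_trans HKS.
case: (boolP ([set: 'I_N] \subset K)) => HK.
  apply: leq_trans (subset_leq_card HK); rewrite cardsT card_ord.
  by apply: leq_trans (max_card _) _; rewrite card_ord.
have [j0 Hj0] : exists j0, j0 \notin K.
  move/subsetPn: HK => [j0 _ Hj]; by exists j0.
exact: (@KeyM.key R N U lam f delta S alpha j0 HU Hj0 Hf).
Qed.
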